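(* Let $s,m$ be positive integers with $m$ odd, $n=sm$, and let $k$ be a positive integer with $t=\gcd(n,k)$ such that $\mathbb{F}_{2^t}\subseteq\mathbb{F}_{2^s}$ (i.e. $t\mid s$). Let $g(x)=x^{2^k+1}$ on $\mathbb{F}_{2^n}$. Then for all $a\in\mathbb{F}_{2^s}\setminus\{0\}$ and $b\in\mathbb{F}_{2^s}$, the equation $g(x+a)+g(x)=b$ has no solution $x\in\mathbb{F}_{2^n}\setminus\mathbb{F}_{2^s}$. *)

(* Defs.v *)
From mathcomp Require Import all_boot all_algebra all_field.
Set Implicit Arguments. Unset Strict Implicit. Unset Printing Implicit Defensive.
Import GRing.Theory.
Local Open Scope ring_scope.

(* For a finite field F of characteristic 2 with #|F| = 2^n and s | n,
   the subfield F_{2^s} of F is the set of fixed points of x |-> x^(2^s). *)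
Definition in_subfield2 (F : finFieldType) (s : nat) (x : F) : bool :=
  x ^+ (2 ^ s) == x.

(* Main.v *)
Require Import Defs.
From mathcomp Require Import all_boot all_algebra all_field.
From mathcomp Require Import ring.
Import GRing.Theory.
Local Open Scope ring_scope.

Section Aux.
Variable F : finFieldType.
Hypothesis ch2 : (2 \in [pchar F])%N.

Lemma frobD2 (i : nat) (u v : F) : (u + v) ^+ (2 ^ i) = u ^+ (2 ^ i) + v ^+ (2 ^ i).
Proof.
elim: i => [|i IH]; first by rewrite !expn0 !expr1.
rewrite expnSr !exprM IH.
by rewrite sqrrD mulr2n addrr_pchar2 // addr0.
Qed.

Lemma expXX (i j : nat) (x : F) : x ^+ (2 ^ (i + j)) = (x ^+ (2 ^ i)) ^+ (2 ^ j).
Proof. by rewrite expnD exprM. Qed.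

Lemma fix_mul (i r : nat) (x : F) : x ^+ (2 ^ i) = x -> x ^+ (2 ^ (i * r)) = x.
Proof.
move=> H; elim: r => [|r IH]; first by rewrite muln0 expn0 expr1.
by rewrite mulnS expXX H IH.
Qed.
End Aux.

Theorem proposition2p5 (F : finFieldType) (s m k : nat) :
  (0 < s)%N -> (0 < m)%N -> odd m -> (0 < k)%N ->
  (2 \in [pchar F])%N -> #|F| = (2 ^ (s * m))%N ->
  (gcdn (s * m) k %| s)%N ->
  forall a b : F, in_subfield2 s a -> a != 0 -> in_subfield2 s b ->
  forall x : F, ~~ in_subfield2 s x ->
    (x + a) ^+ (2 ^ k + 1) + x ^+ (2 ^ k + 1) != b.
Proof.
move=> s0 m0 om k0 ch2 cardF tdiv a b /eqP Ha a0 /eqP Hb x Hx.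
apply/eqP => H.
set q := (2 ^ k)%N in H.
have cardE : forall w : F, w ^+ (2 ^ (s * m)) = w by move=> w; rewrite -cardF expf_card.
set y := x / a.
have xE : x = y * a by rewrite /y divfK.
clearbody y.
have aq0 : a ^+ (q + 1) != 0 by rewrite expf_neq0.
have key : (y ^+ q + y) * a ^+ (q + 1) = b + a ^+ (q + 1).
  rewrite -H xE !exprD !expr1 /q frobD2 // !exprMn.
  rewrite [RHS](_ : _ = (y ^+ (2 ^ k) + y) * (a ^+ (2 ^ k) * a)
     + (y ^+ (2 ^ k) * a ^+ (2 ^ k) * (y * a) + y ^+ (2 ^ k) * a ^+ (2 ^ k) * (y * a))
     + (a ^+ (2 ^ k) * a + a ^+ (2 ^ k) * a)); last by ring.
  by rewrite !addrr_pchar2 // !addr0.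
set c := b / a ^+ (q + 1) + 1.
have Hy : y ^+ q + y = c.
  by rewrite -(mulfK aq0 (y ^+ q + y)) key mulrDl divff.
have Hc : c ^+ (2 ^ s) = c.
  rewrite /c frobD2 // expr1n exprMn exprVn -exprM mulnC exprM Ha Hb //.
have Hyn : y ^+ (2 ^ s) != y.
  apply/negP => /eqP Hy'; move/negP: Hx; apply; apply/eqP.
  by rewrite xE exprMn Hy' Ha.
set z := y ^+ (2 ^ s) + y.
have zq : z ^+ q = z.
  have : z ^+ q + z = 0.
    rewrite /z /q frobD2 // -!exprM mulnC exprM.
    rewrite (_ : _ + _ + _ = (y ^+ (2 ^ k) + y) ^+ (2 ^ s) + (y ^+ (2 ^ k) + y)).
      by rewrite -/q Hy Hc addrr_pchar2.
    by rewrite frobD2 //; ring.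
  by move/eqP; rewrite addr_eq0 oppr_pchar2 // => /eqP.
have zt : z ^+ (2 ^ gcdn (s * m) k) = z.
  have nm0 : (0 < s * m)%N by rewrite muln_gt0 s0 m0.
  have [a1 _] := Bezoutl k nm0.
  case/dvdnP => d Hd.
  have := @fix_mul F (s * m) d z (cardE z).
  by rewrite mulnC -Hd addnC expXX mulnC fix_mul.
have zs : z ^+ (2 ^ s) = z.
  by case/dvdnP: tdiv => r ->; rewrite mulnC fix_mul.
have ys : y ^+ (2 ^ s) = y + z by rewrite /z addrCA addrr_pchar2 // addr0.
have iter : forall j, y ^+ (2 ^ (s * j)) = if odd j then y + z else y.
  elim => [|j IH]; first by rewrite muln0 expn0 expr1.
  rewrite mulnS expXX ys frobD2 // IH fix_mul //= .
  by case: (odd j) => /=; rewrite ?addrK_pchar2.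
have := iter m; rewrite om cardE => E.
have z0 : z = 0 by apply: (@addrI _ y); rewrite addr0 -E.
by move: Hyn; rewrite ys z0 addr0 eqxx.
Qed.
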